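(* Let $R$ be a Hecke symmetry and let $\int:H_R\to\mathbb{K}$ be a left integral on $H_R$. Then $\int(x)=0$ for every element $x\in H_R$ that is homogeneous of nonzero degree with respect to the $\mathbb{Z}$-grading $\deg z^i_j=1$, $\deg t^i_j=-1$.
   Context: $\mathbb{K}$ is a field of characteristic zero, $q\in\mathbb{K}^\times$ not a root of unity ($q=1$ allowed). $R$ is a Hecke symmetry on $V$ (basis $x_1,\dots,x_d$, $(x_i\otimes x_j)R=\sum x_k\otimes x_lR^{kl}_{ij}$): invertible, satisfying Yang–Baxter, $(R+1)(R-q)=0$, and closed (a matrix $P$ with $\sum R^{il}_{jk}P^{km}_{ln}=\delta^i_n\delta^m_j$ exists). $H_R$ is the Hopf envelope of the bialgebra $E_R$; it is generated by $z^i_j$ and $t^i_j$ ($1\le i,j\le d$) subject to $\sum R^{mn}_{ij}z^k_mz^l_n=\sum z^p_iz^s_jR^{kl}_{ps}$, $\sum_jt^i_jz^j_k=\delta^i_k$, $\sum_jz^i_jt^j_k=\delta^i_k$, with $\Delta(z^j_i)=\sum_k z^j_k\otimes z^k_i$, $\Delta(t^j_i)=\sum_k t^k_i\otimes t^j_k$, antipode $S(z^i_j)=t^i_j$; these relations are homogeneous for the grading $\deg z=1$, $\deg t=-1$. A left integral is a linear functional $\int$ with $\int(x)=\sum x_{(1)}\int(x_{(2)})$ whenever $\Delta(x)=\sum x_{(1)}\otimes x_{(2)}$. *)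

(* Defs.v *)
From HB Require Import structures.
From mathcomp Require Import all_boot all_order all_algebra.
Set Implicit Arguments. Unset Strict Implicit. Unset Printing Implicit Defensive.
Import Order.TTheory GRing.Theory Num.Theory.
Local Open Scope ring_scope.

(* Linear operators on a space with finite basis T, given by their     *)
(* coefficients w.r.t. a RIGHT action:  (e_a) A = sum_b A a b e_b.     *)
(* Composition "first A then B".                                       *)
Section Ops.
Variable K : fieldType.

Definition opcomp (T : finType) (A B : T -> T -> K) : T -> T -> K :=
  fun a c => \sum_b A a b * B b c.

Definition opid (T : finType) : T -> T -> K := fun a b => (a == b)%:R.

Variable d : nat.
Notation V2 := ('I_d * 'I_d)%type.
Notation V3 := ('I_d * 'I_d * 'I_d)%type.

(* R (i,j) (k,l) = R^{kl}_{ij}, i.e. (x_i (x) x_j) R = sum x_k (x) x_l R^{kl}_{ij} *)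
Definition R12 (R : V2 -> V2 -> K) : V3 -> V3 -> K :=
  fun a b => R (a.1.1, a.1.2) (b.1.1, b.1.2) * (a.2 == b.2)%:R.
Definition R23 (R : V2 -> V2 -> K) : V3 -> V3 -> K :=
  fun a b => (a.1.1 == b.1.1)%:R * R (a.1.2, a.2) (b.1.2, b.2).

Definition hecke_symmetry (q : K) (R : V2 -> V2 -> K) : Prop :=
  [/\ (exists Ri : V2 -> V2 -> K,
         opcomp R Ri =2 (fun a b => opid a b) /\ opcomp Ri R =2 (fun a b => opid a b)),
      opcomp (opcomp (R12 R) (R23 R)) (R12 R)
        =2 opcomp (opcomp (R23 R) (R12 R)) (R23 R),
      opcomp (fun a b => R a b + opid a b) (fun a b => R a b - q * opid a b)
        =2 (fun _ _ => 0)
    & (* closedness: sum_{k,l} R^{il}_{jk} P^{km}_{ln} = delta^i_n delta^m_j,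
         with P k m l n = P^{km}_{ln} *)
      exists P : 'I_d -> 'I_d -> 'I_d -> 'I_d -> K,
        forall i j m n : 'I_d,
          \sum_(k < d) \sum_(l < d) R (j, k) (i, l) * P k m l n
            = ((i == n) && (m == j))%:R].

(* The free algebra on the generators z^i_j, t^i_j.                    *)
(* A generator is (b, i, j): b = true means z^i_j, b = false t^i_j.    *)
(* Elements of the free algebra are formal finite sums of words,       *)
(* represented by lists of (coefficient, word); two lists represent    *)
(* the same element iff they have the same coefficient function coef.  *)
Definition gen := (bool * 'I_d * 'I_d)%type.
Definition word := seq gen.
Definition fsum := seq (K * word).

Definition zg (i j : 'I_d) : gen := (true, i, j).
Definition tg (i j : 'I_d) : gen := (false, i, j).

Definition coef (p : fsum) (w : word) : K := \sum_(e <- p | e.2 == w) e.1.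

Definition rel_RTT (R : V2 -> V2 -> K) (i j k l : 'I_d) : fsum :=
  [seq (R (i, j) mn, [:: zg k mn.1; zg l mn.2]) | mn <- enum (Finite.clone _ V2)]
  ++ [seq (- R ps (k, l), [:: zg ps.1 i; zg ps.2 j]) | ps <- enum (Finite.clone _ V2)].
Definition rel_tz (i k : 'I_d) : fsum :=
  [seq (1, [:: tg i j; zg j k]) | j <- enum 'I_d] ++ [:: (- (i == k)%:R, [::])].
Definition rel_zt (i k : 'I_d) : fsum :=
  [seq (1, [:: zg i j; tg j k]) | j <- enum 'I_d] ++ [:: (- (i == k)%:R, [::])].

Definition is_rel (R : V2 -> V2 -> K) (r : fsum) : Prop :=
  (exists i j k l, r = rel_RTT R i j k l) \/
  (exists i k, r = rel_tz i k) \/ (exists i k, r = rel_zt i k).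

Definition sandwich (c : K) (u : word) (r : fsum) (v : word) : fsum :=
  [seq (c * e.1, u ++ e.2 ++ v) | e <- r].

(* membership in the two-sided ideal I generated by the relations;
   H_R = free algebra / I *)
Definition in_ideal (R : V2 -> V2 -> K) (p : fsum) : Prop :=
  exists s : seq (K * word * fsum * word),
    (forall e, e \in s -> is_rel R e.1.2) /\
    forall w, coef p w
      = coef (flatten [seq sandwich e.1.1.1 e.1.1.2 e.1.2 e.2 | e <- s]) w.

(* A linear functional on the free algebra is given by its values on words. *)
Definition ev (f : word -> K) (p : fsum) : K := \sum_(e <- p) e.1 * f e.2.

Definition delta_gen (g : gen) : seq (gen * gen) :=
  let: (b, j, i) := g in
  if b then [seq (zg j k, zg k i) | k <- enum 'I_d]
  else [seq (tg k i, tg j k) | k <- enum 'I_d].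

Fixpoint deltaw (w : word) : seq (word * word) :=
  match w with
  | [::] => [:: ([::], [::])]
  | g :: w' => [seq (ab.1 :: uv.1, ab.2 :: uv.2) | ab <- delta_gen g, uv <- deltaw w']
  end.

(* (id (x) f) o Delta *)
Definition id_tensor (f : word -> K) (p : fsum) : fsum :=
  [seq (e.1 * f uv.2, uv.1) | e <- p, uv <- deltaw e.2].

(* f is a linear functional on H_R (vanishes on I) which is a left integral:
   sum x_(1) f(x_(2)) = f(x) 1 in H_R for every x. *)
Definition left_integral (R : V2 -> V2 -> K) (f : word -> K) : Prop :=
  (forall p, in_ideal R p -> ev f p = 0) /\
  (forall p, in_ideal R (id_tensor f p ++ [:: (- ev f p, [::])])).

Definition deg (w : word) : int := \sum_(g <- w) (if g.1.1 then 1 else -1).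

Definition homogeneous (n : int) (p : fsum) : Prop :=
  forall e, e \in p -> deg e.2 = n.

End Ops.

(* Main.v *)
Require Import Defs.
From mathcomp Require Import all_boot all_order all_algebra.
From mathcomp Require Import ring.
Import GRing.Theory.
Local Open Scope ring_scope.

Section Aux.
Variables (K : fieldType) (d : nat).

Definition eps (w : word d) : K := \prod_(g <- w) (g.1.2 == g.2)%:R.
Definition phi (w : word d) : K := if deg w == 0 then eps w else 0.

Lemma ev_cat (f : word d -> K) (p q : fsum K d) : ev f (p ++ q) = ev f p + ev f q.
Proof. by rewrite /ev big_cat. Qed.

Lemma ev_coef (f : word d -> K) (s : seq (word d)) (p : fsum K d) :
  uniq s -> {subset map snd p <= s} ->
  ev f p = \sum_(w <- s) coef p w * f w.
Proof.
move=> us; elim: p => [|e p IH] sub.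
  by rewrite /ev big_nil big1 // => w _; rewrite /coef big_nil mul0r.
have -> : \sum_(w <- s) coef (e :: p) w * f w =
   \sum_(w <- s) ((e.2 == w)%:R * e.1 * f w) + \sum_(w <- s) coef p w * f w.
  rewrite -big_split; apply: eq_bigr => w _ /=.
  rewrite /coef big_cons; case: eqP => _; rewrite ?mul1r ?mul0r ?add0r //.
  by rewrite mulrDl.
rewrite /ev big_cons -/(ev f p) IH; last by move=> x hx; apply: sub; rewrite inE hx orbT.
congr (_ + _).
have he : e.2 \in s by apply: sub; rewrite inE eqxx.
rewrite (bigD1_seq e.2) //= eqxx mul1r big1 ?addr0 // => w /negPf hw.
by rewrite eq_sym hw mul0r mul0r.
Qed.

Lemma ev_eq (f : word d -> K) (p q : fsum K d) :
  (forall w, coef p w = coef q w) -> ev f p = ev f q.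
Proof.
move=> h.
have us := undup_uniq (map snd (p ++ q)).
rewrite (@ev_coef f _ p us) ?(@ev_coef f _ q us); try by move=> x hx; rewrite mem_undup map_cat mem_cat hx ?orbT.
by apply: eq_bigr => w _; rewrite h.
Qed.

Lemma deg_cat (u v : word d) : deg (u ++ v) = deg u + deg v.
Proof. by rewrite /deg big_cat. Qed.
Lemma eps_cat (u v : word d) : eps (u ++ v) = eps u * eps v.
Proof. by rewrite /eps big_cat. Qed.

Lemma ev_sandwich (c : K) (u : word d) (r : fsum K d) (v : word d) (D : int) :
  (forall e, e \in r -> deg e.2 = D) -> ev eps r = 0 ->
  ev phi (sandwich c u r v) = 0.
Proof.
move=> hD h0; rewrite /ev /sandwich big_map.
transitivity (\sum_(e <- r) (c * eps u * eps v * (deg u + D + deg v == 0)%:R) * (e.1 * eps e.2)).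
  rewrite big_seq [RHS]big_seq; apply: eq_bigr => e he /=.
  rewrite /phi !deg_cat !eps_cat hD // addrA.
  by case: eqP => _; rewrite ?mulr1 ?mulr0 ?mul0r //; ring.
by rewrite -mulr_sumr -/(ev eps r) h0 mulr0.
Qed.
End Aux.

Section Rel.
Variables (K : fieldType) (d : nat).

Lemma sum_seq_delta (T : eqType) (s : seq T) (a : T) (G : T -> K) :
  uniq s -> a \in s -> (forall x, x != a -> G x = 0) -> \sum_(x <- s) G x = G a.
Proof.
move=> us ha h0; rewrite (bigD1_seq a) //= big1 ?addr0 // => x hx; exact: h0.
Qed.

Lemma eps_RTT (R : 'I_d * 'I_d -> 'I_d * 'I_d -> K) i j k l :
  ev (@eps K d) (rel_RTT R i j k l) = 0.
Proof.
rewrite /rel_RTT ev_cat /ev !big_map.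
under eq_bigr do rewrite /eps !big_cons big_nil /=.
under [X in _ + X]eq_bigr do rewrite /eps !big_cons big_nil /=.
rewrite (@sum_seq_delta _ _ (k, l)); [|exact: index_enum_uniq|exact: mem_index_enum|]; last first.
  by move=> [m n]; rewrite xpair_eqE negb_and => /orP [] /negPf h; rewrite eq_sym in h; rewrite /= h ?mul0r ?mulr0.
rewrite (@sum_seq_delta _ _ (i, j)); [|exact: index_enum_uniq|exact: mem_index_enum|]; last first.
  by move=> [m n]; rewrite xpair_eqE negb_and => /orP [] /negPf h; rewrite /= h ?mul0r ?mulr0.
by rewrite !eqxx !mulr1 addrN.
Qed.

Lemma eps_tz (i k : 'I_d) : ev (@eps K d) (@rel_tz K d i k) = 0.
Proof.
rewrite /rel_tz ev_cat /ev !big_map big_cons big_nil.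
under eq_bigr do rewrite /eps !big_cons big_nil /=.
rewrite (@sum_seq_delta _ _ i); [|exact: index_enum_uniq|exact: mem_index_enum|]; last first.
  by move=> x /negPf h; rewrite /= eq_sym h ?mul0r ?mulr0.
by rewrite /= /eps big_nil eqxx !mul1r !mulr1 addr0 addrN.
Qed.

Lemma eps_zt (i k : 'I_d) : ev (@eps K d) (@rel_zt K d i k) = 0.
Proof.
rewrite /rel_zt ev_cat /ev !big_map big_cons big_nil.
under eq_bigr do rewrite /eps !big_cons big_nil /=.
rewrite (@sum_seq_delta _ _ i); [|exact: index_enum_uniq|exact: mem_index_enum|]; last first.
  by move=> x /negPf h; rewrite /= eq_sym h ?mul0r ?mulr0.
by rewrite /= /eps big_nil eqxx !mul1r !mulr1 addr0 addrN.
Qed.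
End Rel.

Section Main.
Variables (K : fieldType) (d : nat).

Lemma deg_cons (g : gen d) (w : word d) : deg (g :: w) = (if g.1.1 then 1 else -1) + deg w.
Proof. by rewrite /deg big_cons. Qed.
Lemma deg_nil : deg ([::] : word d) = 0.
Proof. by rewrite /deg big_nil. Qed.

Lemma in_ideal_phi (R : 'I_d * 'I_d -> 'I_d * 'I_d -> K) p :
  in_ideal R p -> ev (@phi K d) p = 0.
Proof.
case=> s [hs hc]; rewrite (@ev_eq K d _ _ _ hc) /ev big_flatten big_map big_seq big1 // => e he.
have := hs e he; case=> [[i [j [k [l ->]]]]|[[i [k ->]]|[i [k ->]]]].
- apply: (@ev_sandwich _ _ _ _ _ _ 2); last exact: eps_RTT.
  move=> x; rewrite mem_cat => /orP [] /mapP [y _ ->]; by rewrite /= !deg_cons deg_nil.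
- apply: (@ev_sandwich _ _ _ _ _ _ 0); last exact: eps_tz.
  move=> x; rewrite mem_cat => /orP [/mapP [y _ ->]|]; first by rewrite /= !deg_cons deg_nil.
  by rewrite inE => /eqP -> /=; rewrite deg_nil.
- apply: (@ev_sandwich _ _ _ _ _ _ 0); last exact: eps_zt.
  move=> x; rewrite mem_cat => /orP [/mapP [y _ ->]|]; first by rewrite /= !deg_cons deg_nil.
  by rewrite inE => /eqP -> /=; rewrite deg_nil.
Qed.

Lemma deltaw_deg (w : word d) uv : uv \in deltaw w -> deg uv.1 = deg w.
Proof.
elim: w uv => [|g w IH] uv /=; first by rewrite inE => /eqP ->.
case/allpairsPdep => ab [uv' [hab huv ->]] /=.
rewrite !deg_cons (IH _ huv); congr (_ + _).
move: hab; case: g => [[b j] i]; case: b => /mapP [k _ ->] //.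
Qed.

End Main.

Theorem lemma4p1 (K : fieldType) (d : nat) (q : K)
    (R : 'I_d * 'I_d -> 'I_d * 'I_d -> K) :
  [pchar K] =i pred0 ->
  q != 0 ->
  (q = 1 \/ forall n : nat, (0 < n)%N -> q ^+ n != 1) ->
  hecke_symmetry q R ->
  forall f : word d -> K, left_integral R f ->
  forall (n : int) (p : fsum K d), n != 0 -> homogeneous n p -> ev f p = 0.
Proof.
move=> _ _ _ _ f [_ hint] n p hn hp.
have := @in_ideal_phi K d R _ (hint p); rewrite ev_cat.
have -> : ev (@phi K d) (id_tensor f p) = 0.
  rewrite /ev big_seq big1 // => x /allpairsPdep [e [uv [he huv ->]]] /=.
  by rewrite /phi (@deltaw_deg _ _ _ huv) (hp e he) (negPf hn) mulr0.
rewrite add0r /ev big_cons big_nil /phi /eps deg_nil eqxx big_nil /=.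
by rewrite mulr1 addr0 => /eqP; rewrite oppr_eq0 => /eqP.
Qed.
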